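(* Let $p\neq0$ and let $\lambda,\mu$ be nonzero finite Borel measures on $\mathbb{S}^{n-1}$. Then a convex body $K\in\mathcal{K}^n_0$ is a solution of the maximization problem $\sup\{\Phi_{\lambda,\mu,p}(\rho_L):L\in\mathcal{K}^n_0\}$ if and only if $\rho_K$ is a solution of the maximization problem $\sup\{\Phi_{\lambda,\mu,p}(f):f\in C^+(\mathbb{S}^{n-1})\}$.
   Context: $\mathcal{K}^n_0$ is the set of compact convex subsets of $\mathbb{R}^n$ containing the origin in their interior; for $K\in\mathcal{K}^n_0$, $h_K(x)=\max_{y\in K}\langle y,x\rangle$ and $\rho_K(u)=\max\{t>0:tu\in K\}$. $C^+(\mathbb{S}^{n-1})$ denotes the positive continuous functions on $\mathbb{S}^{n-1}$. For $f\in C^+(\mathbb{S}^{n-1})$, $\langle f\rangle=\mathrm{conv}\{f(u)u:u\in\mathbb{S}^{n-1}\}$. For a measure $\nu$, $|\nu|$ denotes its total mass. The functional is $$\Phi_{\lambda,\mu,p}(f)=-\frac{1}{|\lambda|}\int_{\mathbb{S}^{n-1}}\log h_{\langle f\rangle}(x)\,d\lambda(x)-\frac1p\log\Big(\frac{1}{|\mu|}\int_{\mathbb{S}^{n-1}}f^{-p}(u)\,d\mu(u)\Big).$$ *)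

(* Defs.v *)
From HB Require Import structures.
From mathcomp Require Import all_boot all_order all_algebra.
From mathcomp Require Import all_classical all_reals all_analysis.
Set Implicit Arguments. Unset Strict Implicit. Unset Printing Implicit Defensive.
Import Order.TTheory GRing.Theory Num.Theory.
Import numFieldNormedType.Exports.
Local Open Scope classical_set_scope.
Local Open Scope ring_scope.

(* Ambient space R^(n+1) is represented by row vectors 'rV[R]_n.+1;
   the unit sphere is S^n (the paper's S^{n-1} with paper-n = n+1). *)

Section Sphere.
Variables (R : realType) (n : nat).
Local Notation V := 'rV[R]_n.+1.

Definition dot (x y : V) : R := \sum_(i < n.+1) x ord0 i * y ord0 i.
Definition enorm (x : V) : R := Num.sqrt (dot x x).

Definition e0 : V := \row_(j < n.+1) (j == ord0)%:R.

Lemma e0_unit : dot e0 e0 == 1.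
Proof.
apply/eqP; rewrite /dot (bigD1 ord0) //= big1 ?addr0.
  by rewrite !mxE eqxx mulr1.
by move=> i /negbTE Hi; rewrite !mxE Hi mulr0.
Qed.

Definition sphere_sub := {u : V | dot u u == 1}.
HB.instance Definition _ := Choice.on sphere_sub.
HB.instance Definition _ := isPointed.Build sphere_sub (exist _ e0 e0_unit).

(* traces on the sphere of open subsets of R^(n+1): the open sets of the
   subspace topology; they generate the Borel sigma-algebra of the sphere *)
Definition sphere_opens : set (set sphere_sub) :=
  [set [set u : sphere_sub | U (sval u)] | U in [set U : set V | open U]].
End Sphere.

Definition sphere (R : realType) (n : nat) :=
  g_sigma_algebraType (@sphere_opens R n).

Section Functional.
Variables (R : realType) (n : nat).
Local Notation V := 'rV[R]_n.+1.
Local Notation S := (sphere R n).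

Definition svec (u : S) : V := sval u.

Definition conv (A : set V) : set V :=
  [set x | exists (k : nat) (w : 'I_k -> R) (y : 'I_k -> V),
      [/\ (forall i, 0 <= w i), \sum_(i < k) w i = 1,
          (forall i, A (y i)) & x = \sum_(i < k) w i *: y i]].

Definition convex_set (K : set V) : Prop :=
  forall x y (t : R), K x -> K y -> 0 <= t <= 1 -> K (t *: x + (1 - t) *: y).

Definition convex_body0 (K : set V) : Prop :=
  [/\ compact K, convex_set K & interior K 0].

Definition supp_fun (K : set V) (x : V) : R := sup [set dot y x | y in K].

Definition radial (K : set V) (u : S) : R :=
  sup [set t : R | 0 < t /\ K (t *: svec u)].

Definition Cplus (f : S -> R) : Prop :=
  (forall u, 0 < f u) /\
  (forall u (e : R), 0 < e -> exists2 d : R, 0 < d &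
     forall v, enorm (svec v - svec u) < d -> `|f v - f u| < e).

Definition hull (f : S -> R) : set V := conv [set f u *: svec u | u in setT].

Definition Phi (lam mu : {finite_measure set S -> \bar R}) (p : R) (f : S -> R) : R :=
  - (fine (lam setT))^-1 * Rintegral lam setT (fun x => ln (supp_fun (hull f) (svec x)))
  - p^-1 * ln ((fine (mu setT))^-1 * Rintegral mu setT (fun u => f u `^ (- p))).

End Functional.

(* Main.v *)
Require Import Defs.
From HB Require Import structures.
From mathcomp Require Import all_boot all_order all_algebra.
From mathcomp Require Import all_classical all_reals all_analysis.
From mathcomp Require Import ring lra.
From mathcomp Require finmap.
From mathcomp Require Import measurable_realfun.
Set Implicit Arguments. Unset Strict Implicit. Unset Printing Implicit Defensive.
Import Order.TTheory GRing.Theory Num.Theory.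
Import numFieldNormedType.Exports.
Local Open Scope classical_set_scope.
Local Open Scope ring_scope.

Section Basic.
Variables (R : realType) (n : nat).
Local Notation V := 'rV[R]_n.+1.
Local Notation dot := (@dot R n).
Local Notation enorm := (@enorm R n).

Lemma dotC (x y : V) : dot x y = dot y x.
Proof. by rewrite /Defs.dot; apply: eq_bigr => i _; rewrite mulrC. Qed.

Lemma dot_sum k (w : 'I_k -> R) (y : 'I_k -> V) (z : V) :
  dot (\sum_(i < k) w i *: y i) z = \sum_(i < k) w i * dot (y i) z.
Proof.
rewrite /Defs.dot.
under eq_bigr do rewrite summxE big_distrl /=.
rewrite exchange_big /=; apply: eq_bigr => i _.
rewrite big_distrr /=; apply: eq_bigr => j _.
by rewrite !mxE mulrA.

Qed.

Lemma dotZl a (x z : V) : dot (a *: x) z = a * dot x z.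
Proof.
rewrite /Defs.dot big_distrr; apply: eq_bigr => j _.
by rewrite !mxE -mulrA.
Qed.

Lemma dotDl (x y z : V) : dot (x + y) z = dot x z + dot y z.
Proof.
rewrite /Defs.dot -big_split; apply: eq_bigr => j _.
by rewrite !mxE mulrDl.
Qed.

Lemma dotNl (x z : V) : dot (- x) z = - dot x z.
Proof.
rewrite /Defs.dot -sumrN; apply: eq_bigr => j _.
by rewrite !mxE mulNr.
Qed.

Lemma dot0l (z : V) : dot 0 z = 0.
Proof. by rewrite /Defs.dot big1 // => j _; rewrite !mxE mul0r. Qed.

Lemma dotBl (x y z : V) : dot (x - y) z = dot x z - dot y z.
Proof. by rewrite dotDl dotNl. Qed.

Lemma dot_ge0 (x : V) : 0 <= dot x x.
Proof. by rewrite /Defs.dot sumr_ge0 // => i _; rewrite -expr2 sqr_ge0. Qed.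

Lemma coord_sq_le (x : V) i : x ord0 i ^+ 2 <= dot x x.
Proof.
rewrite /Defs.dot (bigD1 i) //= expr2 lerDl sumr_ge0 // => j _.
by rewrite -expr2 sqr_ge0.
Qed.

Lemma coord_le_enorm (x : V) i : `|x ord0 i| <= enorm x.
Proof.
rewrite /Defs.enorm -sqrtr_sqr; rewrite ler_sqrt ?coord_sq_le //.
exact: dot_ge0.
Qed.

Lemma norm_le_enorm (x : V) : `|x| <= enorm x.
Proof.
rewrite [leLHS]/Num.norm /= mx_normrE.
apply: bigmax_le; first by rewrite /Defs.enorm sqrtr_ge0.
move=> [i j] _ /=; rewrite (ord1 i); exact: coord_le_enorm.
Qed.

Lemma coord_le_norm (x : V) i : `|x ord0 i| <= `|x|.
Proof.
rewrite [leRHS]/Num.norm /= mx_normrE.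
exact: (le_bigmax _ (fun ij : 'I_1 * 'I_n.+1 => `|x ij.1 ij.2|) (ord0, i)).
Qed.

Lemma sum_abs_ge_enorm (x : V) : enorm x <= \sum_i `|x ord0 i|.
Proof.
have h0 : 0 <= \sum_i `|x ord0 i| by apply: sumr_ge0 => i _.
rewrite /Defs.enorm -(ger0_norm h0).
rewrite -sqrtr_sqr ler_sqrt; last by rewrite sqr_ge0.
rewrite /Defs.dot expr2 mulr_suml; apply: ler_sum => i _.
rewrite mulr_sumr (bigD1 i) //=; apply: ler_wpDr.
  by apply: sumr_ge0 => j _; rewrite mulr_ge0.
by rewrite -normrM ler_norm.
Qed.

Lemma enorm_le_norm (x : V) : enorm x <= n.+1%:R * `|x|.
Proof.
apply: (le_trans (sum_abs_ge_enorm x)).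
have -> : n.+1%:R * `|x| = \sum_(i < n.+1) `|x|.
  by rewrite sumr_const card_ord mulr_natl.
apply: ler_sum => i _.
exact: coord_le_norm.
Qed.

End Basic.


Section Radial.
Variables (R : realType) (n : nat).
Local Notation V := 'rV[R]_n.+1.
Local Notation S := (sphere R n).
Local Notation dot := (@dot R n).
Local Notation enorm := (@enorm R n).

Lemma svec_unit (u : S) : dot (svec u) (svec u) = 1.
Proof. exact/eqP/(proj2_sig u). Qed.

Lemma enorm_unit (u : S) : enorm (svec u) = 1.
Proof. by rewrite /Defs.enorm svec_unit sqrtr1. Qed.

Lemma norm_unit_le (u : S) : `|svec u| <= 1.
Proof. by rewrite -(enorm_unit u) norm_le_enorm. Qed.

Lemma norm_unit_ge (u : S) : 1 <= n.+1%:R * `|svec u|.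
Proof. by apply: le_trans (enorm_le_norm _); rewrite enorm_unit. Qed.

Lemma enormN (x : V) : enorm (- x) = enorm x.
Proof. by rewrite /Defs.enorm dotNl dotC dotNl opprK. Qed.

Lemma enorm_ge0 (x : V) : 0 <= enorm x.
Proof. exact: sqrtr_ge0. Qed.

Lemma body_bounded (L : set V) : compact L ->
  exists2 M, 0 < M & forall x, L x -> `|x| <= M.
Proof.
move=> /compact_bounded [M0 [_ HM]].
have h : M0 < `|M0| + 1 by apply: (le_lt_trans (ler_norm M0)); rewrite ltrDl.
exists (`|M0| + 1); first by rewrite ltr_wpDl.
by move=> x Lx; apply: (HM _ h).
Qed.

Lemma body_ball (L : set V) : interior L 0 ->
  exists2 r, 0 < r & forall x : V, `|x| < r -> L x.
Proof.
move=> /nbhs_ballP [r r0 Hr]; exists r => // x hx; apply: Hr.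
by rewrite -ball_normE /= sub0r normrN.
Qed.

Definition Tset (L : set V) (u : S) := [set t : R | 0 < t /\ L (t *: svec u)].

Lemma radialE L u : radial L u = sup (Tset L u).
Proof. by []. Qed.

Lemma Tset_ub (L : set V) M u t : (forall x, L x -> `|x| <= M) ->
  Tset L u t -> t <= n.+1%:R * M.
Proof.
move=> HM [t0 Lt].
have := HM _ Lt; rewrite mx_normZ gtr0_norm // => h.
apply: (le_trans (y := t * (n.+1%:R * `|svec u|))).
  by rewrite ler_peMr ?(ltW t0) //; apply: norm_unit_ge.
by rewrite mulrCA ler_wpM2l.
Qed.

Lemma Tset_in (L : set V) r u t : (forall x : V, `|x| < r -> L x) ->
  0 < t < r -> Tset L u t.
Proof.
move=> Hr /andP[t0 tr]; split => //; apply: Hr.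
rewrite mx_normZ gtr0_norm //; apply: (le_lt_trans _ tr).
by apply: ler_piMr; [exact: ltW | exact: norm_unit_le].
Qed.

Section Body.
Variables (L : set V) (M r : R).
Hypotheses (M0 : 0 < M) (r0 : 0 < r) (HM : forall x, L x -> `|x| <= M)
  (Hr : forall x : V, `|x| < r -> L x) (cvL : Defs.convex_set L).

Lemma Tset_has_sup u : has_sup (Tset L u).
Proof.
split; first by exists (r / 2); apply: (@Tset_in L r u (r/2) Hr); apply/andP; split; move: r0 => r0'; lra.
by exists (n.+1%:R * M) => t; apply: Tset_ub.
Qed.

Lemma radial_ge u : r / 2 <= radial L u.
Proof.
rewrite radialE; apply: ub_le_sup; first by case: (Tset_has_sup u).
by apply: (@Tset_in L r u (r/2) Hr); apply/andP; split; move: r0 => r0'; lra.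
Qed.

Lemma radial_le u : radial L u <= n.+1%:R * M.
Proof.
rewrite radialE; apply: ge_sup; first by case: (Tset_has_sup u).
by move=> t; apply: Tset_ub.
Qed.

Lemma radial_lower e : 0 < e -> exists2 d, 0 < d &
  forall u v : S, enorm (svec v - svec u) < d -> radial L u - e < radial L v.
Proof.
move=> e0; move: (M0) (r0) => M0' r0'.
set B := n.+1%:R * M.
have B0 : 0 < B by rewrite mulr_gt0 // ltr0n.
set th := Num.min (1/2) (e / (2 * B)).
have th0 : 0 < th by rewrite lt_min; apply/andP; split; [lra|rewrite divr_gt0 // mulr_gt0].
have th1 : th <= 1/2 by rewrite ge_min lexx.
have thB : th * B <= e / 2.
  have : th <= e / (2 * B) by rewrite ge_min lexx orbT.
  rewrite ler_pdivlMr ?mulr_gt0 // => h; lra.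
exists (th * r / B); first by rewrite divr_gt0 // mulr_gt0.
move=> u v duv.
have [s [s0 Ls] hs] := sup_adherent (eps := e / 2) ltac:(lra) (Tset_has_sup u).
have sB : s <= B by apply: (@Tset_ub L M u s HM); split.
have c0 : 0 < (1 - th) * s / th by rewrite divr_gt0 // mulr_gt0 //; lra.
set z : V := ((1 - th) * s / th) *: (svec v - svec u).
have hz : `|z| < r.
  rewrite /z mx_normZ (ger0_norm (ltW c0)).
  apply: (le_lt_trans (y := (1 - th) * s / th * enorm (svec v - svec u))).
    by apply: ler_wpM2l; [exact: ltW | exact: norm_le_enorm].
  apply: (lt_le_trans (y := (1 - th) * s / th * (th * r / B))).
    by rewrite ltr_pM2l.
  have -> : (1 - th) * s / th * (th * r / B) = ((1 - th) * s / B) * r.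
    by field; rewrite !gt_eqF.
  apply: ler_piMl; first exact: ltW.
  rewrite ler_pdivrMr // mul1r; apply: (le_trans _ sB).
  by apply: ler_piMl; [exact: ltW | lra].
have Ts' : Tset L v ((1 - th) * s).
  split; first by rewrite mulr_gt0 //; lra.
  have -> : ((1 - th) * s) *: svec v = (1 - th) *: (s *: svec u) + (1 - (1 - th)) *: z.
    rewrite /z scalerA scalerA scalerBr.
    have -> : (1 - (1 - th)) * ((1 - th) * s / th) = (1 - th) * s.
      by field; rewrite gt_eqF.
    by rewrite addrCA subrr addr0.
  apply: cvL => //; first exact: Hr.
  by apply/andP; split; lra.
have : (1 - th) * s <= radial L v.
  by rewrite radialE; apply: ub_le_sup => //; case: (Tset_has_sup v).
have : th * s <= th * B by apply: ler_wpM2l => //; exact: ltW.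
rewrite !radialE mulrBl mul1r; lra.
Qed.

End Body.

Lemma radial_Cplus (L : set V) : convex_body0 L -> Cplus (radial L).
Proof.
case=> cL cvL iL.
have [M M0 HM] := body_bounded cL.
have [r r0 Hr] := body_ball iL.
split.
  move=> u; apply: (lt_le_trans _ (radial_ge r0 HM Hr u)); lra.
move=> u e e0.
have [d d0 Hd] := radial_lower M0 r0 HM Hr cvL e0.
exists d => // v duv.
have h1 := Hd u v duv.
have h2 : radial L v - e < radial L u.
  by apply: Hd; rewrite -opprB enormN.
rewrite ltr_norml; apply/andP; split; lra.
Qed.

End Radial.


Section Bounds.
Variables (R : realType) (n : nat).
Local Notation V := 'rV[R]_n.+1.
Local Notation S := (sphere R n).
Local Notation dot := (@dot R n).
Local Notation enorm := (@enorm R n).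

Lemma dot_cont : continuous (fun x : V => dot x x).
Proof.
rewrite /Defs.dot; apply: continuous_big.
  exact: (@pseudometric_normed_Zmodule.add_continuous R R^o).
move=> i _ x; apply: continuousM; exact: coord_continuous.
Qed.

Definition Sset := [set x : V | dot x x = 1].

Lemma Sset_compact : compact Sset.
Proof.
apply: bounded_closed_compact.
  exists 1; split; first exact: num_real.
  move=> M M1 x /= hx; apply: le_trans (ltW M1).
  by apply: le_trans (norm_le_enorm x) _; rewrite /Defs.enorm hx sqrtr1.
have h := (continuous_closedP _).1 dot_cont _ (@closed_eq R (1:R)).
exact: h.
Qed.

Lemma Cplus_bounds (f : S -> R) : Cplus f ->
  exists c C, [/\ 0 < c, 0 < C & forall u, c <= f u <= C].
Proof.
move=> [fpos fcont].
have /choice [d Hd] : forall u : sphere_sub R n, exists d : R, 0 < d /\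
    forall v : S, enorm (svec v - svec u) < d -> `|f v - f u| < f u / 2.
  move=> u; have [d d0 Hd] := fcont u (f u / 2) ltac:(have := fpos u; lra).
  by exists d; split.
have cpt := Sset_compact; rewrite compact_cover in cpt.
have cov : Sset `<=` cover setT (fun u : sphere_sub R n => ball (svec u) (d u / n.+1%:R)).
  move=> x hx; exists (exist _ x (introT eqP hx)) => //.
  apply: ballxx; rewrite divr_gt0 ?ltr0n //.
  by case: (Hd (exist _ x (introT eqP hx))).
have [D' _ HD'] := cpt (sphere_sub R n) setT
   (fun u => ball (svec u) (d u / n.+1%:R)) (fun u _ => ball_open _ _) cov.
have key : forall v : S, exists2 i, i \in finmap.enum_fset D' &
    f i / 2 < f v < 3 / 2 * f i.
  move=> v; have [i iD hi] := HD' (svec v) (svec_unit v).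
  exists i => //.
  have [d0 Hdi] := Hd i.
  have : `|f v - f i| < f i / 2.
    apply: Hdi; apply: le_lt_trans (enorm_le_norm _) _.
    rewrite -ltr_pdivlMl ?ltr0n // mulrC.
    by move: hi; rewrite -ball_normE /= -normrN opprB.
  rewrite ltr_norml => /andP[h1 h2]; apply/andP; split; lra.
set Ssum := \sum_(i <- finmap.enum_fset D') (2 / f i).
set Csum := \sum_(i <- finmap.enum_fset D') (3 / 2 * f i).
have term_le : forall (F : sphere_sub R n -> R) i, i \in finmap.enum_fset D' ->
    (forall j, 0 <= F j) -> F i <= \sum_(j <- finmap.enum_fset D') F j.
  move=> F i iD F0; rewrite (bigD1_seq i iD (finmap.fset_uniq D')) /=.
  by apply: ler_wpDr => //; apply: sumr_ge0 => j _.
have [i0 i0D _] := key point.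
have Ssum0 : 0 < Ssum.
  apply: lt_le_trans (term_le (fun j => 2 / f j) _ i0D _).
    by rewrite divr_gt0 // fpos.
  by move=> j; rewrite divr_ge0 // ltW // fpos.
exists Ssum^-1, Csum; split.
- by rewrite invr_gt0.
- apply: lt_le_trans (term_le (fun j => 3 / 2 * f j) _ i0D _).
    by rewrite mulr_gt0 // fpos.
  by move=> j; rewrite mulr_ge0 // ltW // fpos.
- move=> v; have [i iD /andP[h1 h2]] := key v.
  have fi0 := fpos i.
  apply/andP; split.
    apply: le_trans (ltW h1).
    have -> : f i / 2 = (2 / f i)^-1 by rewrite invf_div.
    rewrite lef_pV2 ?posrE ?divr_gt0 //.
    by apply: (term_le (fun j => 2 / f j)) => // j; rewrite divr_ge0 // ltW // fpos.
  apply: le_trans (ltW h2) _.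
  by apply: (term_le (fun j => 3 / 2 * f j)) => // j; rewrite mulr_ge0 // ltW // fpos.
Qed.

End Bounds.


Section Meas.
Variables (R : realType) (n : nat).
Local Notation V := 'rV[R]_n.+1.
Local Notation S := (sphere R n).
Local Notation dot := (@dot R n).
Local Notation enorm := (@enorm R n).

Definition econt (g : S -> R) := forall u (e : R), 0 < e -> exists2 d : R, 0 < d &
     forall v, enorm (svec v - svec u) < d -> `|g v - g u| < e.

Lemma econt_measurable (g : S -> R) : econt g -> measurable_fun setT g.
Proof.
move=> gc.
apply: (measurability _ (measurable_realfun.RGenOInfty.measurableE R)).
move=> _ [_ [x ->] <-].
set U := [set y : V | exists u : S, exists2 d : R, (0 < d /\ `|y - svec u| < d) &
   forall v : S, `|svec v - svec u| < d -> x < g v].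
have oU : open U.
  rewrite openE => y [u [d [d0 hy] Hv]].
  apply/nbhs_ballP; exists (d - `|y - svec u|); first by rewrite /= subr_gt0.
  move=> z; rewrite -ball_normE /= => hz.
  exists u; exists d => //; split => //.
  have -> : z - svec u = (z - y) + (y - svec u) by rewrite addrA subrK.
  apply: le_lt_trans (ler_normD _ _) _.
  by move: hz; rewrite -normrN opprB; lra.
have -> : setT `&` g @^-1` `]x, +oo[%classic = [set u : S | U (svec u)].
  rewrite setTI; apply/seteqP; split => u /=.
    rewrite in_itv /= andbT => hu.
    have [d d0 Hd] := gc u (g u - x) ltac:(by rewrite subr_gt0).
    exists u; exists (d / n.+1%:R).
      by split; [rewrite divr_gt0 ?ltr0n | rewrite subrr normr0 divr_gt0 ?ltr0n].
    move=> v hv.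
    have : `|g v - g u| < g u - x.
      apply: Hd; apply: le_lt_trans (enorm_le_norm _) _.
      by rewrite -ltr_pdivlMl ?ltr0n // mulrC.
    rewrite ltr_norml => /andP[h1 h2]; lra.
  move=> [v [d [d0 hv] Hv]]; rewrite in_itv /= andbT.
  exact: Hv.
apply: sub_sigma_algebra; exists U => //.
Qed.

Lemma Cplus_econt f : Cplus f -> econt f.
Proof. by case. Qed.

Lemma Cplus_pow_measurable (f : S -> R) q : Cplus f ->
  measurable_fun setT (fun u => f u `^ q).
Proof.
move=> /Cplus_econt /econt_measurable mf.
have h := measurableT_comp (@measurable_realfun.measurable_powR R q) mf.
exact: h.
Qed.

Section Int.
Variable mu : {finite_measure set S -> \bar R}.

Lemma mu_fin : mu setT \is a fin_num.
Proof. exact: fin_num_measure. Qed.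

Lemma int_bounds (g : S -> R) a b : measurable_fun setT g -> 0 <= a ->
  (forall u, a <= g u <= b) ->
  ((a%:E * mu setT <= \int[mu]_(x in setT) (g x)%:E) /\
   (\int[mu]_(x in setT) (g x)%:E <= b%:E * mu setT))%E.
Proof.
move=> mg a0 hab.
have mgE : measurable_fun [set: S] (fun x : S => (g x)%:E) by apply/measurable_realfun.measurable_EFinP.
have hx : forall x, a <= g x /\ g x <= b by move=> x; apply/andP.
split.
  rewrite -(integral_cst mu measurableT).
  apply: ge0_le_integral => //.
  - by move=> x _; rewrite lee_fin; case: (hx x).
rewrite -(integral_cst mu measurableT).
apply: ge0_le_integral => //.
- by move=> x _; rewrite lee_fin; case: (hx x) => h1 _; exact: le_trans h1.
- by move=> x _; rewrite lee_fin; case: (hx x).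
Qed.

Lemma Rint_bounds (g : S -> R) a b : measurable_fun setT g -> 0 <= a ->
  (forall u, a <= g u <= b) ->
  [/\ (\int[mu]_(x in setT) (g x)%:E)%E \is a fin_num,
      a * fine (mu setT) <= Rintegral mu setT g &
      Rintegral mu setT g <= b * fine (mu setT)].
Proof.
move=> mg a0 hab.
have [h1 h2] := int_bounds mg a0 hab.
have m0 : (0 <= mu setT)%E by exact: measure_ge0.
have mfin : mu setT \is a fin_num := mu_fin.
have b0 : 0 <= b.
  have /andP[h h'] := hab (point : S).
  exact: le_trans a0 (le_trans h h').
have ifin : (\int[mu]_(x in setT) (g x)%:E)%E \is a fin_num.
  rewrite ge0_fin_numE; last first.
    by apply: le_trans h1; rewrite mule_ge0.
  apply: le_lt_trans h2 _.
  by rewrite -(fineK mfin) -EFinM ltry.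
split => //.
  rewrite /Rintegral -lee_fin (fineK ifin) EFinM (fineK mfin) //.
rewrite /Rintegral -lee_fin (fineK ifin) EFinM (fineK mfin) //.
Qed.

End Int.
End Meas.


Section Conv.
Variables (R : realType) (n : nat).
Local Notation V := 'rV[R]_n.+1.
Local Notation S := (sphere R n).
Local Notation dot := (@dot R n).
Local Notation enorm := (@enorm R n).

Lemma conv_dot_le (A : set V) (x z : V) M :
  (forall a, A a -> dot a z <= M) -> Defs.conv A x -> dot x z <= M.
Proof.
move=> HA [k [w [ys [w0 w1 Ay ->]]]]; rewrite dot_sum.
apply: (le_trans (y := \sum_(i < k) w i * M)).
  by apply: ler_sum => i _; apply: ler_wpM2l => //; exact: HA.
by rewrite -mulr_suml w1 mul1r.
Qed.

Lemma conv_in (A : set V) a : A a -> Defs.conv A a.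
Proof.
move=> Aa; exists 1%N, (fun _ => 1), (fun _ => a); split => //.
- by rewrite big_ord1.
- by rewrite big_ord1 scale1r.
Qed.

Definition neg_s (u : S) : S := exist _ (- svec u) (introT eqP
  (etrans (etrans (dotNl _ _) (congr1 -%R (etrans (dotC _ _) (dotNl _ _))))
     (etrans (opprK _) (svec_unit u)))).

Lemma svec_neg u : svec (neg_s u) = - svec u.
Proof. by []. Qed.

Lemma dot_abs_le (u : S) (x : V) : `|dot (svec u) x| <= \sum_i `|x ord0 i|.
Proof.
rewrite /Defs.dot; apply: le_trans (ler_norm_sum _ _ _) _.
apply: ler_sum => i _; rewrite normrM.
apply: ler_piMl => //; apply: le_trans (coord_le_enorm _ _) _.
by rewrite enorm_unit.
Qed.

Lemma sum_abs_le (y : V) : \sum_i `|y ord0 i| <= n.+1%:R * enorm y.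
Proof.
have -> : n.+1%:R * enorm y = \sum_(i < n.+1) enorm y.
  by rewrite sumr_const card_ord mulr_natl.
by apply: ler_sum => i _; exact: coord_le_enorm.
Qed.

Lemma dot_le_norm_sum (x y : V) : dot x y <= `|x| * \sum_i `|y ord0 i|.
Proof.
rewrite /Defs.dot mulr_sumr; apply: ler_sum => i _.
apply: le_trans (ler_norm _) _; rewrite normrM.
by apply: ler_wpM2r => //; exact: coord_le_norm.
Qed.

Definition ecoord (i : 'I_n.+1) : V := \row_j (j == i)%:R.

Lemma dot_ecoord (x : V) i : dot x (ecoord i) = x ord0 i.
Proof.
rewrite /Defs.dot (bigD1 i) //= big1 ?addr0.
  by rewrite !mxE eqxx mulr1.
by move=> j /negbTE Hj; rewrite !mxE Hj mulr0.
Qed.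

Lemma sum_ecoord i : \sum_j `|ecoord i ord0 j| = 1.
Proof.
rewrite (bigD1 i) //= big1 ?addr0.
  by rewrite !mxE eqxx normr1.
by move=> j /negbTE Hj; rewrite !mxE Hj normr0.
Qed.

Lemma sum_abs_N (y : V) : \sum_i `|(- y) ord0 i| = \sum_i `|y ord0 i|.
Proof. by apply: eq_bigr => i _; rewrite !mxE normrN. Qed.

Lemma dot_cont_l (y : V) : continuous (fun x : V => dot x y).
Proof.
rewrite /Defs.dot; apply: continuous_big.
  exact: (@pseudometric_normed_Zmodule.add_continuous R R^o).
move=> i _ x; apply: continuousM; first exact: coord_continuous.
exact: cst_continuous.
Qed.

Section Hull.
Variables (f : S -> R) (c C : R).
Hypotheses (c0 : 0 < c) (C0 : 0 < C) (hf : forall u, c <= f u <= C).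

Local Notation H := (Defs.hull f).
Local Notation h := (Defs.supp_fun H).

Lemma fc u : c <= f u. Proof. by case/andP: (hf u). Qed.
Lemma fC u : f u <= C. Proof. by case/andP: (hf u). Qed.

Lemma H_dot_le (a x : V) : H a -> dot a x <= C * \sum_i `|x ord0 i|.
Proof.
apply: conv_dot_le => _ [u _ <-]; rewrite dotZl.
have f0 : 0 <= f u by apply: le_trans (ltW c0) (fc u).
apply: (le_trans (y := f u * `|dot (svec u) x|)).
  by apply: ler_wpM2l => //; exact: ler_norm.
apply: (le_trans (y := f u * \sum_i `|x ord0 i|)).
  by apply: ler_wpM2l => //; exact: dot_abs_le.
by apply: ler_wpM2r; [apply: sumr_ge0 => i _ | exact: fC].
Qed.

Lemma H_gen u : H (f u *: svec u).
Proof. by apply: conv_in; exists u. Qed.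

Lemma h_ub x : has_ubound [set dot y x | y in H].
Proof. by exists (C * \sum_i `|x ord0 i|) => _ [y Hy <-]; exact: H_dot_le. Qed.

Lemma h_ge a x : H a -> dot a x <= h x.
Proof. by move=> Ha; apply: ub_le_sup; [exact: h_ub | exists a]. Qed.

Lemma h_le x M : (forall a, H a -> dot a x <= M) -> h x <= M.
Proof.
move=> HM; apply: ge_sup.
  by exists (dot (f point *: svec point) x); exists (f point *: svec point) => //; exact: H_gen.
by move=> _ [y Hy <-]; exact: HM.
Qed.

Lemma h_lower x : c * enorm x <= h x.
Proof.
have [->|x0] := eqVneq x 0.
  have -> : enorm 0 = 0 by rewrite /Defs.enorm dot0l sqrtr0.
  rewrite mulr0.
  by apply: le_trans (h_ge 0 (H_gen point)); rewrite /Defs.dot big1 // => i _; rewrite !mxE mulr0.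
have e0 : 0 < enorm x.
  rewrite /Defs.enorm sqrtr_gt0 lt_neqAle dot_ge0 andbT eq_sym.
  apply/negP => /eqP d0; move/eqP: x0; apply; apply/rowP => i.
  have := coord_sq_le x i; rewrite d0 mxE => h0.
  by apply/eqP; rewrite -sqrf_eq0 eq_le h0 sqr_ge0.
have ee : enorm x ^+ 2 = dot x x by rewrite /Defs.enorm sqr_sqrtr // dot_ge0.
have uu : dot ((enorm x)^-1 *: x) ((enorm x)^-1 *: x) == 1.
  by rewrite dotZl dotC dotZl -ee; apply/eqP; field; rewrite (gt_eqF e0).
pose u : S := exist _ ((enorm x)^-1 *: x) uu.
apply: le_trans (h_ge x (H_gen u)).
rewrite dotZl /u /svec /= dotZl -ee.
have -> : (enorm x)^-1 * enorm x ^+ 2 = enorm x by field; rewrite (gt_eqF e0).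
by apply: ler_wpM2r; [exact: ltW | exact: fc].
Qed.

Lemma h_ge0 x : 0 <= h x.
Proof.
apply: le_trans (h_lower x); apply: mulr_ge0; [exact: ltW | exact: enorm_ge0].
Qed.

Definition Lb : set V := [set x | forall y, dot x y <= h y].

Lemma H_sub_Lb a : H a -> Lb a.
Proof. by move=> Ha y; exact: h_ge. Qed.

Lemma Lb_convex : Defs.convex_set Lb.
Proof.
move=> x y t Lx Ly /andP[t0 t1] z.
rewrite dotDl !dotZl.
have := Lx z; have := Ly z; have hz := h_ge0 z.
move=> h1 h2.
apply: (le_trans (y := t * h z + (1 - t) * h z)); last by rewrite -mulrDl subrKC mul1r.
apply: lerD; apply: ler_wpM2l => //; lra.
Qed.

Lemma Lb_closed : closed Lb.
Proof.
have -> : Lb = \bigcap_(y in setT) [set x | dot x y <= h y].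
  by apply/seteqP; split => x /= Hx y; [move=> _; exact: Hx | exact: (Hx y I)].
apply: closed_bigI => y _.
have hc := (continuous_closedP _).1 (@dot_cont_l y) _ (@closed_le R (h y)).
exact: hc.
Qed.

Lemma Lb_bounded x : Lb x -> `|x| <= C.
Proof.
move=> Lx; rewrite [leLHS]/Num.norm /= mx_normrE.
apply: bigmax_le; first exact: ltW.
move=> [i j] _ /=; rewrite (ord1 i).
rewrite ler_norml; apply/andP; split.
  have := Lx (- ecoord j); rewrite dotC dotNl dotC dot_ecoord => hx.
  have : h (- ecoord j) <= C.
    apply: h_le => a Ha; apply: le_trans (H_dot_le _ Ha) _.
    by rewrite sum_abs_N sum_ecoord mulr1.
  lra.
have := Lx (ecoord j); rewrite dot_ecoord => hx.
apply: le_trans hx _.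
apply: h_le => a Ha; apply: le_trans (H_dot_le _ Ha) _.
by rewrite sum_ecoord mulr1.
Qed.

Lemma Lb_body : convex_body0 Lb.
Proof.
split.
- apply: bounded_closed_compact; last exact: Lb_closed.
  exists C; split; first exact: num_real.
  move=> M CM x Lx; apply: le_trans (ltW CM); exact: Lb_bounded.
- exact: Lb_convex.
- apply/nbhs_ballP; exists (c / n.+1%:R); first by rewrite /= divr_gt0 ?ltr0n.
  move=> x; rewrite -ball_normE /= sub0r normrN => hx y.
  apply: le_trans (dot_le_norm_sum x y) _.
  apply: le_trans (h_lower y).
  apply: (le_trans (y := `|x| * (n.+1%:R * enorm y))).
    by apply: ler_wpM2l => //; exact: sum_abs_le.
  rewrite mulrA; apply: ler_wpM2r; first exact: enorm_ge0.
  by rewrite -ler_pdivlMr ?ltr0n //; exact: ltW.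
Qed.

Local Notation rho := (Defs.radial Lb).

Lemma T_ub u t : Tset Lb u t -> t <= h (svec u).
Proof.
move=> [t0 Lt]; have := Lt (svec u).
by rewrite dotZl svec_unit mulr1.
Qed.

Lemma T_has_sup u : has_sup (Tset Lb u).
Proof.
split; last by exists (h (svec u)) => t; exact: T_ub.
exists (f u); split; first exact: lt_le_trans c0 (fc u).
exact: H_sub_Lb (H_gen u).
Qed.

Lemma rho_ge u : f u <= rho u.
Proof.
rewrite radialE; apply: ub_le_sup; first by case: (T_has_sup u).
split; first exact: lt_le_trans c0 (fc u).
exact: H_sub_Lb (H_gen u).
Qed.

Lemma rho_in u : Lb (rho u *: svec u).
Proof.
move=> y; rewrite dotZl.
have r0 : 0 <= rho u by apply: le_trans (rho_ge u); apply: le_trans (ltW c0) (fc u).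
have [dp|dn] := ltP 0 (dot (svec u) y); last first.
  by apply: le_trans (h_ge0 y); rewrite mulr_ge0_le0.
rewrite -ler_pdivlMr // radialE; apply: ge_sup; first by case: (T_has_sup u).
move=> t [t0 Lt]; rewrite ler_pdivlMr //.
by have := Lt y; rewrite dotZl.
Qed.

Local Notation G := (Defs.hull rho).
Local Notation g := (Defs.supp_fun G).

Lemma G_sub_Lb a : G a -> Lb a.
Proof. by move=> Ga y; apply: conv_dot_le Ga => _ [u _ <-]; exact: rho_in. Qed.

Lemma g_ub x : has_ubound [set dot y x | y in G].
Proof. by exists (h x) => _ [y Gy <-]; exact: G_sub_Lb. Qed.

Lemma g_ge a x : G a -> dot a x <= g x.
Proof. by move=> Ga; apply: ub_le_sup; [exact: g_ub | exists a]. Qed.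

Lemma G_gen u : G (rho u *: svec u).
Proof. by apply: conv_in; exists u. Qed.

Lemma supp_eq : g = h.
Proof.
apply/funext => x; apply/eqP; rewrite eq_le; apply/andP; split.
  apply: ge_sup.
    by exists (dot (rho point *: svec point) x); exists (rho point *: svec point) => //; exact: G_gen.
  by move=> _ [y Gy <-]; exact: G_sub_Lb.
apply: h_le => a Ha; apply: conv_dot_le Ha => _ [u _ <-].
rewrite dotZl.
have fu0 : 0 < f u by apply: lt_le_trans c0 (fc u).
have [dp|dn] := leP 0 (dot (svec u) x).
  apply: le_trans (g_ge x (G_gen u)); rewrite dotZl.
  by apply: ler_wpM2r => //; exact: rho_ge.
apply: le_trans (g_ge x (G_gen (neg_s u))).
rewrite dotZl svec_neg dotNl.
have r0 : 0 < rho (neg_s u) by apply: lt_le_trans (rho_ge _); apply: lt_le_trans c0 (fc _).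
have : 0 < rho (neg_s u) * - dot (svec u) x by rewrite mulr_gt0 // oppr_gt0.
have : f u * dot (svec u) x < 0 by rewrite pmulr_rlt0.
lra.
Qed.

End Hull.
End Conv.


Section PhiSec.
Variables (R : realType) (n : nat).
Local Notation V := 'rV[R]_n.+1.
Local Notation S := (sphere R n).

Lemma pow_bounds (f : S -> R) q : Cplus f ->
  exists a b, 0 < a /\ forall u, a <= f u `^ q <= b.
Proof.
move=> fC; have [c [C [c0 C0 hf]]] := Cplus_bounds fC.
have fp u : 0 < f u by case: fC.
have [q0|q0] := leP 0 q.
  exists (c `^ q), (C `^ q); split; first exact: powR_gt0.
  have nn (x : R) : 0 < x -> x \is Num.nneg by move=> hx; rewrite nnegrE; exact: ltW.
  move=> u; have /andP[h1 h2] := hf u; apply/andP; split.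
    exact: (ge0_ler_powR q0 (nn _ c0) (nn _ (fp u)) h1).
  exact: (ge0_ler_powR q0 (nn _ (fp u)) (nn _ C0) h2).
have E x : x `^ q = (x `^ (- q))^-1 by rewrite -powRN opprK.
have q0' : 0 <= - q by rewrite oppr_ge0 ltW.
have nn (x : R) : 0 < x -> x \is Num.nneg by move=> hx; rewrite nnegrE; exact: ltW.
exists (C `^ (- q))^-1, (c `^ (- q))^-1; split.
  by rewrite invr_gt0 powR_gt0.
move=> u; have /andP[h1 h2] := hf u; rewrite E; apply/andP; split.
  rewrite lef_pV2 ?posrE ?powR_gt0 ?fp //.
  exact: (ge0_ler_powR q0' (nn _ (fp u)) (nn _ C0) h2).
rewrite lef_pV2 ?posrE ?powR_gt0 ?fp //.
exact: (ge0_ler_powR q0' (nn _ c0) (nn _ (fp u)) h1).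

Qed.

Lemma Rint_mono (mu : {finite_measure set S -> \bar R}) (g1 g2 : S -> R) a1 b1 a2 b2 :
  measurable_fun setT g1 -> measurable_fun setT g2 -> 0 <= a1 -> 0 <= a2 ->
  (forall u, a1 <= g1 u <= b1) -> (forall u, a2 <= g2 u <= b2) ->
  (forall u, g1 u <= g2 u) -> Rintegral mu setT g1 <= Rintegral mu setT g2.
Proof.
move=> m1 m2 a10 a20 h1 h2 h12.
have [f1 _ _] := Rint_bounds mu m1 a10 h1.
have [f2 _ _] := Rint_bounds mu m2 a20 h2.
rewrite /Rintegral; apply: fine_le => //.
apply: ge0_le_integral => //.
- by move=> x _; rewrite lee_fin; have /andP[h h'] := h1 x; exact: le_trans a10 h.
- exact/measurable_EFinP.
- exact/measurable_EFinP.
- by move=> x _; rewrite lee_fin.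
Qed.

Lemma Phi_le (lam mu : {finite_measure set S -> \bar R}) p (f g : S -> R) :
  p != 0 -> mu setT != 0%E -> Cplus f -> Cplus g -> (forall u, f u <= g u) ->
  Defs.supp_fun (Defs.hull f) = Defs.supp_fun (Defs.hull g) ->
  Phi lam mu p f <= Phi lam mu p g.
Proof.
move=> p0 mu0 fC gC fg suppE.
rewrite /Phi suppE lerD2l.
have mfin : mu setT \is a fin_num := mu_fin mu.
have m0 : 0 < fine (mu setT).
  rewrite -lte_fin (fineK mfin) lt_def mu0 /=; exact: measure_ge0.
have [af [bf [af0 hf]]] := pow_bounds (- p) fC.
have [ag [bg [ag0 hg]]] := pow_bounds (- p) gC.
have mf := Cplus_pow_measurable (- p) fC.
have mg := Cplus_pow_measurable (- p) gC.
have [_ If0 _] := Rint_bounds mu mf (ltW af0) hf.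
have [_ Ig0 _] := Rint_bounds mu mg (ltW ag0) hg.
set If := Rintegral mu setT (fun u => f u `^ (- p)) in If0 *.
set Ig := Rintegral mu setT (fun u => g u `^ (- p)) in Ig0 *.
have If0' : 0 < If by apply: lt_le_trans If0; rewrite mulr_gt0.
have Ig0' : 0 < Ig by apply: lt_le_trans Ig0; rewrite mulr_gt0.
have fp u : 0 < f u by case: fC.
have gp u : 0 < g u by case: gC.
have pos1 : (fine (mu setT))^-1 * If \is Num.pos by rewrite posrE mulr_gt0 ?invr_gt0.
have pos2 : (fine (mu setT))^-1 * Ig \is Num.pos by rewrite posrE mulr_gt0 ?invr_gt0.
rewrite lerN2.
have [pp|pn] := ltP 0 p.
  apply: ler_wpM2l; first by rewrite invr_ge0 ltW.
  rewrite ler_ln //; apply: ler_wpM2l; first by rewrite invr_ge0; exact: ltW.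
  apply: (Rint_mono _ mg mf (ltW ag0) (ltW af0) hg hf) => u.
  rewrite !powRN lef_pV2 ?posrE ?powR_gt0 ?fp ?gp //.
  have nn (x : R) : 0 < x -> x \is Num.nneg by move=> hx; rewrite nnegrE; exact: ltW.
  exact: (ge0_ler_powR (ltW pp) (nn _ (fp u)) (nn _ (gp u)) (fg u)).
have pn' : p < 0 by rewrite lt_neqAle p0 pn.
apply: ler_wnM2l; first by rewrite invr_le0 ltW.
rewrite ler_ln //; apply: ler_wpM2l; first by rewrite invr_ge0; exact: ltW.
apply: (Rint_mono _ mf mg (ltW af0) (ltW ag0) hf hg) => u.
have nn (x : R) : 0 < x -> x \is Num.nneg by move=> hx; rewrite nnegrE; exact: ltW.
have pn0 : 0 <= - p by rewrite oppr_ge0; exact: ltW.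
exact: (ge0_ler_powR pn0 (nn _ (fp u)) (nn _ (gp u)) (fg u)).
Qed.

End PhiSec.

Theorem lemma5p1 (R : realType) (n : nat)
    (lam mu : {finite_measure set (sphere R n) -> \bar R}) (p : R) :
  p != 0 -> lam setT != 0%E -> mu setT != 0%E ->
  forall K : set 'rV[R]_n.+1, convex_body0 K ->
  ((forall L : set 'rV[R]_n.+1, convex_body0 L ->
      Phi lam mu p (radial L) <= Phi lam mu p (radial K)) <->
   (forall f : sphere R n -> R, Cplus f ->
      Phi lam mu p f <= Phi lam mu p (radial K))).
Proof.
move=> p0 _ mu0 K cbK; split.
  move=> HL f fC.
  have [c [C [c0 C0 hf]]] := Cplus_bounds fC.
  have cbL := Lb_body c0 C0 hf.
  apply: le_trans (HL _ cbL).
  apply: Phi_le => //.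
  - exact: radial_Cplus.
  - by move=> u; exact: (rho_ge c0 hf).
  - by rewrite (supp_eq c0 hf).
move=> Hf L cbL; apply: Hf; exact: radial_Cplus.
Qed.
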